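(* Let $(M,J,c)$ be a conformal almost Hermitian structure of dimension $n\ge4$ and let $\nabla^W$ be a Weyl connection, i.e. a torsion-free affine connection such that for each $g\in c$ there is a 1-form $B$ with $\nabla^W_ag_{bc}=2B_ag_{bc}$. Let $G^W(X,Y):=-\frac12J(\nabla^W_YJ)X$. Then the following are equivalent: (i) $\nabla^W$ is compatible with $J$, i.e. $\nabla^W_aJ^a{}_b=0$; (ii) $G^W$ is totally trace-free; (iii) $JG^W$ is totally trace-free; (iv) $(X,Y)\mapsto G^W(X,JY)$ is totally trace-free; (v) $(X,Y)\mapsto G^W(JX,JY)$ is totally trace-free. Moreover, when these hold, $\nabla^W=\nabla^c$.
   Context: A conformal almost Hermitian structure: $J$ almost complex ($J^2=-\mathrm{id}$), $c$ a conformal class of Riemannian metrics for which $J$ is orthogonal. A $(1,2)$ tensor $H^a{}_{bc}$ is totally trace-free if all contractions vanish: $H^a{}_{ab}=0$, $H^a{}_{ba}=0$, and $g^{bc}H^a{}_{bc}=0$ for $g\in c$. $\nabla^c$ denotes the canonical Weyl connection: for $g\in c$ with Levi-Civita connection $\nabla$, $B_a:=\frac1{n-2}J^c{}_b\nabla_cJ^b{}_a$ and $\nabla^c_aY^b:=\nabla_aY^b-B_aY^b+B^bY_a-B_cY^c\delta^b_a$; this is independent of $g\in c$. *)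

(* Defs.v *)
(* Local coordinate model of a conformal almost
   Hermitian manifold: an open set U of R^n (points are row vectors 'rV[R]_n),
   with all tensors given by their components in the coordinate frame. *)
From HB Require Import structures.
From mathcomp Require Import all_boot all_order all_algebra.
From mathcomp Require Import all_classical all_reals all_analysis.
Set Implicit Arguments. Unset Strict Implicit. Unset Printing Implicit Defensive.
Import Order.TTheory GRing.Theory Num.Theory.
Import numFieldNormedType.Exports.
Local Open Scope ring_scope.
Local Open Scope classical_set_scope.

Section Defs.
Variables (R : realType) (n : nat).
Local Notation pt := 'rV[R]_n.

(* (0,2)- or (1,1)-tensor fields: T x a b  is  T_{ab}  resp.  T^a_b  at x *)
Definition tensor2 := pt -> 'I_n -> 'I_n -> R.
(* (1,2)-tensor fields / connection coefficients: H x a b c is H^a_{bc} at x *)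
Definition tensor3 := pt -> 'I_n -> 'I_n -> 'I_n -> R.

Definition pd (f : pt -> R) (i : 'I_n) (x : pt) : R := derive f x (delta_mx 0 i).

Definition gmx (g : tensor2) (x : pt) : 'M[R]_n := \matrix_(i, j) g x i j.
Definition ginv (g : tensor2) (x : pt) (a b : 'I_n) : R := invmx (gmx g x) a b.

Definition is_metric (g : tensor2) (x : pt) : Prop :=
  (forall a b, g x a b = g x b a) /\
  (forall v : 'rV[R]_n, v != 0 -> 0 < (v *m gmx g x *m v^T) 0 0).

Definition almost_complex (J : tensor2) (x : pt) : Prop :=
  forall a b, \sum_c J x a c * J x c b = - (a == b)%:R.

Definition orthogonal_for (g J : tensor2) (x : pt) : Prop :=
  forall a b, \sum_c \sum_d J x c a * J x d b * g x c d = g x a b.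

(* Levi-Civita Christoffel symbols Gamma^a_{bc} of g, convention
   nabla_b Y^a = d_b Y^a + Gamma^a_{bc} Y^c *)
Definition levi_civita (g : tensor2) : tensor3 := fun x a b c =>
  2^-1 * \sum_d ginv g x a d *
    (pd (fun y => g y d c) b x + pd (fun y => g y d b) c x
     - pd (fun y => g y b c) d x).

Definition cov_metric (Gam : tensor3) (g : tensor2) (x : pt) (a b c : 'I_n) : R :=
  pd (fun y => g y b c) a x
  - \sum_d (Gam x d a b * g x d c + Gam x d a c * g x b d).

Definition cov_endo (Gam : tensor3) (J : tensor2) (x : pt) (a b c : 'I_n) : R :=
  pd (fun y => J y b c) a x
  + \sum_d (Gam x b a d * J x d c - Gam x d a c * J x b d).

Definition is_weyl_connection (U : set pt) (g : tensor2) (GW : tensor3) : Prop :=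
  (forall x, U x -> forall a b c, GW x a b c = GW x a c b) /\
  exists B : pt -> 'I_n -> R,
    forall x, U x -> forall a b c, cov_metric GW g x a b c = 2 * B x a * g x b c.

Definition canonB (g J : tensor2) (x : pt) (a : 'I_n) : R :=
  (n%:R - 2)^-1 * \sum_b \sum_c J x c b * cov_endo (levi_civita g) J x c b a.

Definition canonical_weyl (g J : tensor2) : tensor3 := fun x b a c =>
  levi_civita g x b a c
  - canonB g J x a * (b == c)%:R
  + (\sum_d ginv g x b d * canonB g J x d) * g x a c
  - canonB g J x c * (b == a)%:R.

(* G^W(X,Y) = -1/2 J (nabla^W_Y J) X ;  (G^W)^a_{bc} with X^b, Y^c *)
Definition GWtensor (GW : tensor3) (J : tensor2) : tensor3 := fun x a b c =>
  - 2^-1 * \sum_d J x a d * cov_endo GW J x c d b.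

Definition JH (J : tensor2) (H : tensor3) : tensor3 := fun x a b c =>
  \sum_d J x a d * H x d b c.
Definition H_XJY (J : tensor2) (H : tensor3) : tensor3 := fun x a b c =>
  \sum_e H x a b e * J x e c.
Definition H_JXJY (J : tensor2) (H : tensor3) : tensor3 := fun x a b c =>
  \sum_d \sum_e H x a d e * J x d b * J x e c.

Definition totally_trace_free (U : set pt) (g : tensor2) (H : tensor3) : Prop :=
  forall x, U x ->
    (forall b, \sum_a H x a a b = 0) /\
    (forall b, \sum_a H x a b a = 0) /\
    (forall a, \sum_b \sum_c ginv g x b c * H x a b c = 0).

Definition J_compatible (U : set pt) (GW : tensor3) (J : tensor2) : Prop :=
  forall x, U x -> forall b, \sum_a cov_endo GW J x a a b = 0.

End Defs.

(* Main.v *)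
Require Import Defs.
From HB Require Import structures.
From mathcomp Require Import all_boot all_order all_algebra.
From mathcomp Require Import all_classical all_reals all_analysis.
From mathcomp Require Import ring lra.
Import Order.TTheory GRing.Theory Num.Theory.
Import numFieldNormedType.Exports.
Local Open Scope ring_scope.
Local Open Scope classical_set_scope.
Section Alg.
Variables (R : realType) (n : nat).
Variables (Jm Gm Gi : 'M[R]_n) (D : 'I_n -> 'M[R]_n).
Hypothesis hJJ : Jm *m Jm = - 1%:M.
Hypothesis hGi : Gi *m Gm = 1%:M.
Hypothesis hGi' : Gm *m Gi = 1%:M.
Hypothesis hGT : Gm^T = Gm.
Hypothesis hJG : Jm^T *m Gm = - (Gm *m Jm).
Hypothesis hDJ : forall c, D c *m Jm = - (Jm *m D c).
Hypothesis hDG : forall c, (D c)^T *m Gm = - (Gm *m D c).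

Definition tv : 'rV[R]_n := \row_b \sum_a D a a b.

Lemma L1 (N : 'M[R]_n) b : \sum_c (D c *m N) c b = (tv *m N) 0 b.
Proof.
rewrite mxE; under eq_bigr do rewrite mxE.
rewrite exchange_big /=; apply: eq_bigr => e _; rewrite mxE mulr_suml //.
Qed.

Lemma L2 (M : 'M[R]_n) a : \sum_c (M *m (D c)^T) a c = (M *m tv^T) a 0.
Proof.
rewrite mxE; under eq_bigr do rewrite mxE.
rewrite exchange_big /=; apply: eq_bigr => e _; rewrite !mxE mulr_sumr.
by apply: eq_bigr => c _; rewrite mxE.
Qed.

Lemma GiT : Gi^T = Gi.
Proof.
have : Gi^T *m Gm = 1%:M by rewrite -hGT -trmx_mul hGi' trmx1.
move=> h; rewrite -[Gi^T]mulmx1 -hGi' mulmxA h mul1mx //.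
Qed.

Lemma DGi c : D c *m Gi = - (Gi *m (D c)^T).
Proof.
have h := hDG c.
have e1 : Gi *m ((D c)^T *m Gm) *m Gi = Gi *m (D c)^T.
  by rewrite -mulmxA -mulmxA hGi' mulmx1.
have e2 : Gi *m (- (Gm *m D c)) *m Gi = - (D c *m Gi).
  by rewrite mulmxN mulNmx mulmxA hGi mul1mx.
by rewrite -e1 h e2 opprK.
Qed.

Lemma GiJT : Gi *m Jm^T = - (Jm *m Gi).
Proof.
have e1 : Gi *m (Jm^T *m Gm) *m Gi = Gi *m Jm^T.
  by rewrite -mulmxA -mulmxA hGi' mulmx1.
have e2 : Gi *m (- (Gm *m Jm)) *m Gi = - (Jm *m Gi).
  by rewrite mulmxN mulNmx mulmxA hGi mul1mx.
by rewrite -e1 hJG e2.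
Qed.

Lemma tr_eq0 (x : R) : x = - x -> x = 0.
Proof. move=> h; lra. Qed.

Lemma trJD c : \tr (Jm *m D c) = 0.
Proof.
apply: tr_eq0; rewrite -{1}mxtrace_mulC hDJ raddfN //.
Qed.

Lemma trD c : \tr (D c) = 0.
Proof.
apply: tr_eq0.
have e1 : Jm *m D c *m Jm = D c.
  by rewrite -mulmxA hDJ mulmxN mulmxA hJJ mulNmx mul1mx opprK.
have e2 : \tr (Jm *m D c *m Jm) = - \tr (D c).
  by rewrite mxtrace_mulC mulmxA hJJ mulNmx mul1mx raddfN.
by rewrite -{1}e1 e2.
Qed.

Lemma trJ : \tr Jm = 0.
Proof.
apply: tr_eq0.
have e : Jm = Gi *m (Gm *m Jm) by rewrite mulmxA hGi mul1mx.
have eT : (Gm *m Jm)^T = - (Gm *m Jm) by rewrite trmx_mul hGT hJG.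
have e2 : \tr (Gi *m (Gm *m Jm)) = - \tr (Gm *m Jm *m Gi).
  by rewrite -[\tr (Gi *m _)]mxtrace_tr trmx_mul eT GiT mulNmx raddfN.
have e3 : \tr (Gm *m Jm *m Gi) = \tr Jm.
  by rewrite mxtrace_mulC mulmxA hGi mul1mx.
by rewrite {1}e e2 e3.
Qed.

Lemma entryZ (a : R) (A : 'M[R]_n) i j : (a *: A) i j = a * A i j.
Proof. by rewrite mxE. Qed.
Lemma entryN (A : 'M[R]_n) i j : (- A) i j = - A i j.
Proof. by rewrite mxE. Qed.
Lemma entryD (A B : 'M[R]_n) i j : (A + B) i j = A i j + B i j.
Proof. by rewrite mxE. Qed.
Lemma JD c : Jm *m D c = - (D c *m Jm).
Proof. by rewrite hDJ opprK. Qed.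

Definition T1 (M : 'I_n -> 'M[R]_n) b := \tr (M b).
Definition T2 (M : 'I_n -> 'M[R]_n) b := \sum_a M a a b.
Definition T3 (M : 'I_n -> 'M[R]_n) a := \sum_c (M c *m Gi) a c.
Definition cond M := (forall b, T1 M b = 0) /\ (forall b, T2 M b = 0) /\ (forall a, T3 M a = 0).

Lemma tv0J : tv *m Jm = 0 -> tv = 0.
Proof.
move=> h; have : tv *m Jm *m Jm = - tv by rewrite -mulmxA hJJ mulmxN mulmx1.
by rewrite h mul0mx => /eqP; rewrite eq_sym oppr_eq0 => /eqP.
Qed.

Lemma rowP0 (v : 'rV[R]_n) : (forall b, v 0 b = 0) -> v = 0.
Proof. move=> h; apply/rowP => b; rewrite h mxE //. Qed.

Lemma cond_G : cond (fun c => - 2^-1 *: (Jm *m D c)) <-> tv = 0.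
Proof.
have eT2 b : T2 (fun c => - 2^-1 *: (Jm *m D c)) b = 2^-1 * (tv *m Jm) 0 b.
  rewrite /T2; under eq_bigr do rewrite entryZ JD entryN.
  by rewrite -mulr_sumr sumrN L1 mulNr -mulrN opprK.
split.
  case=> _ [h2 _]; apply: tv0J; apply: rowP0 => b.
  have := h2 b; rewrite eT2 => /eqP; rewrite mulf_eq0 invr_eq0 pnatr_eq0 /= => /eqP //.
move=> t0; split; [|split].
- by move=> b; rewrite /T1 mxtraceZ trJD mulr0.
- by move=> b; rewrite eT2 t0 mul0mx mxE mulr0.
- move=> a; rewrite /T3.
  under eq_bigr do rewrite -scalemxAl entryZ -mulmxA DGi mulmxN mulmxA entryN.
  by rewrite -mulr_sumr sumrN L2 t0 trmx0 mulmx0 mxE oppr0 mulr0.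
Qed.

Lemma half_neq0 : (2^-1 : R) != 0.
Proof. by rewrite invr_eq0 pnatr_eq0. Qed.

Lemma cond_JG : cond (fun c => 2^-1 *: D c) <-> tv = 0.
Proof.
have eT2 b : T2 (fun c => 2^-1 *: D c) b = 2^-1 * tv 0 b.
  by rewrite /T2; under eq_bigr do rewrite entryZ; rewrite -mulr_sumr mxE.
split.
  case=> _ [h2 _]; apply: rowP0 => b.
  have := h2 b; rewrite eT2 => /eqP; rewrite mulf_eq0 (negPf half_neq0) /= => /eqP //.
move=> t0; split; [|split].
- by move=> b; rewrite /T1 mxtraceZ trD mulr0.
- by move=> b; rewrite eT2 t0 mxE mulr0.
- move=> a; rewrite /T3.
  under eq_bigr do rewrite -scalemxAl entryZ DGi entryN.
  by rewrite -mulr_sumr sumrN L2 t0 trmx0 mulmx0 mxE oppr0 mulr0.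
Qed.

Definition MS (X : 'I_n -> 'M[R]_n) c := \sum_e Jm e c *: X e.

Lemma T1S X b : T1 (MS X) b = \sum_e Jm e b * \tr (X e).
Proof. rewrite /T1 /MS raddf_sum; apply: eq_bigr => e _; exact: mxtraceZ. Qed.

Lemma T2S X b : T2 (MS X) b = \sum_e (Jm *m X e) e b.
Proof.
rewrite /T2 /MS; under eq_bigr do rewrite summxE.
rewrite exchange_big; apply: eq_bigr => e _; rewrite mxE.
by apply: eq_bigr => a _; rewrite entryZ.
Qed.

Lemma T3S X a : T3 (MS X) a = \sum_e (X e *m Gi *m Jm^T) a e.
Proof.
rewrite /T3 /MS; under eq_bigr do rewrite mulmx_suml summxE.
rewrite exchange_big; apply: eq_bigr => e _; rewrite mxE.
apply: eq_bigr => c _; rewrite -scalemxAl entryZ [Jm^T _ _]mxE; exact: mulrC.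
Qed.

Lemma cond_XJY : cond (MS (fun e => - 2^-1 *: (Jm *m D e))) <-> tv = 0.
Proof.
have eT2 b : T2 (MS (fun e => - 2^-1 *: (Jm *m D e))) b = 2^-1 * tv 0 b.
  rewrite T2S; under eq_bigr do rewrite -scalemxAr entryZ mulmxA hJJ mulNmx mul1mx entryN.
  by rewrite -mulr_sumr sumrN mulNr -mulrN opprK mxE.
split.
  case=> _ [h2 _]; apply: rowP0 => b.
  have := h2 b; rewrite eT2 => /eqP; rewrite mulf_eq0 (negPf half_neq0) /= => /eqP //.
move=> t0; split; [|split].
- by move=> b; rewrite T1S big1 // => e _; rewrite mxtraceZ trJD !mulr0.
- by move=> b; rewrite eT2 t0 mxE mulr0.
- move=> a; rewrite T3S.
  have e1 e : - 2^-1 *: (Jm *m D e) *m Gi *m Jm^T = - 2^-1 *: (Gi *m (D e)^T).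
    rewrite -!scalemxAl; congr (_ *: _).
    have -> : Jm *m D e *m Gi *m Jm^T = Jm *m (D e *m (Gi *m Jm^T)) by rewrite !mulmxA.
    rewrite GiJT !mulmxN [D e *m _]mulmxA hDJ mulNmx mulmxN opprK -mulmxA.
    by rewrite mulmxA hJJ mulNmx mul1mx DGi opprK.
  under eq_bigr do rewrite e1 entryZ.
  by rewrite -mulr_sumr L2 t0 trmx0 mulmx0 mxE mulr0.
Qed.

Lemma cond_DD : cond (MS (fun e => - 2^-1 *: D e)) <-> tv = 0.
Proof.
have eT2 b : T2 (MS (fun e => - 2^-1 *: D e)) b = 2^-1 * (tv *m Jm) 0 b.
  rewrite T2S; under eq_bigr do rewrite -scalemxAr entryZ JD entryN.
  by rewrite -mulr_sumr sumrN L1 mulNr -mulrN opprK.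
split.
  case=> _ [h2 _]; apply: tv0J; apply: rowP0 => b.
  have := h2 b; rewrite eT2 => /eqP; rewrite mulf_eq0 (negPf half_neq0) /= => /eqP //.
move=> t0; split; [|split].
- by move=> b; rewrite T1S big1 // => e _; rewrite mxtraceZ trD !mulr0.
- by move=> b; rewrite eT2 t0 mul0mx mxE mulr0.
- move=> a; rewrite T3S.
  have e1 e : - 2^-1 *: D e *m Gi *m Jm^T = 2^-1 *: ((Jm *m Gi) *m (D e)^T).
    rewrite -!scalemxAl scaleNr -scalerN; congr (_ *: _).
    rewrite -mulmxA GiJT mulmxN opprK mulmxA hDJ mulNmx -[Jm *m D e *m Gi]mulmxA DGi mulmxN opprK.
    by rewrite mulmxA.
  under eq_bigr do rewrite e1 entryZ.
  by rewrite -mulr_sumr L2 t0 trmx0 mulmx0 mxE mulr0.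
Qed.
End Alg.
Section Alg2.
Variables (R : realType) (n : nat).
Variables (Jm Gm P Q Gam : 'M[R]_n) (b : R).
Hypothesis hJJ : Jm *m Jm = - 1%:M.
Hypothesis hO : Jm^T *m Gm *m Jm = Gm.
Hypothesis hP : P *m Jm + Jm *m P = 0.
Hypothesis hQ : P^T *m Gm *m Jm + Jm^T *m Q *m Jm + Jm^T *m Gm *m P = Q.
Hypothesis hW : Q = Gam^T *m Gm + Gm *m Gam + b *: Gm.

Let D := P + Gam *m Jm - Jm *m Gam.

Lemma hJG2 : Jm^T *m Gm = - (Gm *m Jm).
Proof.
have : Jm^T *m Gm *m Jm *m Jm = Gm *m Jm by rewrite hO.
by rewrite -mulmxA hJJ mulmxN mulmx1 => <-; rewrite opprK.
Qed.

Lemma DJ : D *m Jm = - (Jm *m D).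
Proof.
have e1 : D *m Jm = P *m Jm - Gam - Jm *m Gam *m Jm.
  by rewrite /D mulmxBl mulmxDl -(mulmxA Gam) hJJ mulmxN mulmx1.
have e2 : Jm *m D = Jm *m P + Jm *m Gam *m Jm + Gam.
  by rewrite /D mulmxBr mulmxDr mulmxA mulmxA hJJ mulNmx mul1mx opprK.
have e3 : P *m Jm = - (Jm *m P) by apply/eqP; rewrite -addr_eq0 hP.
rewrite e1 e2 e3 !opprD; rewrite -addrA [- Gam + _]addrC addrA //.
Qed.

Lemma DG : D^T *m Gm = - (Gm *m D).
Proof.
have hJG := hJG2.
have hX : D^T *m Gm *m Jm + Jm^T *m Gm *m D = 0.
  have eS : Gam^T *m Gm + Gm *m Gam = Q - b *: Gm by rewrite hW addrK.
  have eDT : D^T = P^T + Jm^T *m Gam^T - Gam^T *m Jm^T.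
    by rewrite /D !raddfB raddfD /= !trmx_mul.
  have e1 : D^T *m Gm *m Jm = P^T *m Gm *m Jm + Jm^T *m (Gam^T *m Gm) *m Jm
                               - Gam^T *m (Jm^T *m Gm *m Jm).
    by rewrite eDT !mulmxBl !mulmxDl !mulmxA.
  have e2 : Jm^T *m Gm *m D = Jm^T *m Gm *m P + Jm^T *m (Gm *m Gam) *m Jm
                               - Jm^T *m Gm *m Jm *m Gam.
    by rewrite /D !mulmxBr !mulmxDr !mulmxA.
  rewrite e1 e2 hO.
  have e3 : Jm^T *m (Gam^T *m Gm) *m Jm + Jm^T *m (Gm *m Gam) *m Jm
             = Jm^T *m Q *m Jm - b *: Gm.
    by rewrite -mulmxDl -mulmxDr eS mulmxBr mulmxBl -!scalemxAr -scalemxAl hO.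
  have e4 : P^T *m Gm *m Jm + Jm^T *m Gm *m P = Q - Jm^T *m Q *m Jm.
    by rewrite -{1}hQ addrAC addrK.
  set A1 := P^T *m Gm *m Jm; set A2 := Jm^T *m (Gam^T *m Gm) *m Jm.
  set A3 := Jm^T *m Gm *m P; set A4 := Jm^T *m (Gm *m Gam) *m Jm.
  set A5 := Gam^T *m Gm; set A6 := Gm *m Gam.
  have -> : A1 + A2 - A5 + (A3 + A4 - A6) = (A1 + A3) + (A2 + A4) - (A5 + A6).
    by rewrite addrACA [(A1 + A2) + _]addrACA opprD.
  by rewrite e4 e3 /A5 /A6 eS addrA subrK subrr.
have e5 : D^T *m Gm *m Jm = Gm *m Jm *m D.
  by apply/eqP; rewrite -subr_eq0; move: hX; rewrite hJG mulNmx => ->.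
have e6 : (D^T *m Gm + Gm *m D) *m Jm = 0.
  by rewrite mulmxDl e5 -!mulmxA DJ mulmxN subrr.
have : (D^T *m Gm + Gm *m D) *m Jm *m Jm = 0 by rewrite e6 mul0mx.
rewrite -mulmxA hJJ mulmxN mulmx1 => /eqP; rewrite oppr_eq0 addr_eq0 => /eqP //.
Qed.
End Alg2.
Section H.
Variables (R : realType) (n : nat).
Local Notation pt := 'rV[R]_n.

Lemma der_mul (f h : pt -> R) x v : derivable f x v -> derivable h x v ->
  derive (fun y => f y * h y) x v = f x * derive h x v + h x * derive f x v.
Proof. move=> df dh. exact: (deriveM df dh). Qed.

Lemma der_mul_able (f h : pt -> R) x v : derivable f x v -> derivable h x v ->
  derivable (fun y => f y * h y) x v.
Proof. move=> df dh. exact: (derivableM df dh). Qed.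

Lemma der_sum (F : 'I_n -> pt -> R) x v : (forall i, derivable (F i) x v) ->
  derive (fun y => \sum_i F i y) x v = \sum_i derive (F i) x v.
Proof.
move=> dF.
have -> : (fun y => \sum_i F i y) = \sum_(i < n) F i.
  by apply/funext => y; rewrite fct_sumE.
exact: derive_sum.
Qed.

Lemma der_sum_able (F : 'I_n -> pt -> R) x v : (forall i, derivable (F i) x v) ->
  derivable (fun y => \sum_i F i y) x v.
Proof.
move=> dF.
have -> : (fun y => \sum_i F i y) = \sum_(i < n) F i.
  by apply/funext => y; rewrite fct_sumE.
exact: derivable_sum.
Qed.

Lemma der_loc (U : set pt) (f h : pt -> R) x v : open U -> U x ->
  (forall y, U y -> f y = h y) -> derive f x v = derive h x v.
Proof.
move=> oU Ux fh; apply: near_eq_derive.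
near=> y. apply: fh. near: y. exact: (open_nbhs_nbhs (conj oU Ux)).
Unshelve. all: by end_near. Qed.


Lemma sum_delta_r (F : 'I_n -> R) j : \sum_i F i * (i == j)%:R = F j.
Proof.
rewrite (bigD1 j) //= eqxx mulr1 big1 ?addr0 // => i /negPf ->; by rewrite mulr0.
Qed.
Lemma sum_delta_l (F : 'I_n -> R) j : \sum_i F i * (j == i)%:R = F j.
Proof. by under eq_bigr do rewrite eq_sym; exact: sum_delta_r. Qed.

Variables (U : set pt) (g J : tensor2 R n) (x : pt).
Hypothesis oU : open U.
Hypothesis Ux : U x.
Hypothesis dgJ : forall i j,
  differentiable (fun y => g y i j) x /\ differentiable (fun y => J y i j) x.
Hypothesis acJ : forall y, U y -> almost_complex J y.
Hypothesis orJ : forall y, U y -> orthogonal_for g J y.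

Definition Jm : 'M[R]_n := \matrix_(i, j) J x i j.
Definition Pm c : 'M[R]_n := \matrix_(i, j) pd (fun y => J y i j) c x.
Definition Qm c : 'M[R]_n := \matrix_(i, j) pd (fun y => g y i j) c x.

Lemma dJ i j v : derivable (fun y => J y i j) x v.
Proof. exact/diff_derivable/(dgJ i j).2. Qed.
Lemma dg i j v : derivable (fun y => g y i j) x v.
Proof. exact/diff_derivable/(dgJ i j).1. Qed.

Lemma H5 c : Pm c *m Jm + Jm *m Pm c = 0.
Proof.
apply/matrixP => i j; rewrite !mxE.
have e0 : pd (fun y => \sum_k J y i k * J y k j) c x = 0.
  rewrite /pd (@der_loc U _ (fun _ => - (i == j)%:R)) //; first exact: derive_cst.
  by move=> y Uy; rewrite (acJ _ Uy).
move: e0; rewrite /pd (der_sum (fun k y => J y i k * J y k j)); last first.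
  by move=> k; apply: der_mul_able; apply: dJ.
rewrite (eq_bigr (fun k => J x i k * pd (fun y => J y k j) c x
                         + J x k j * pd (fun y => J y i k) c x)); last first.
  by move=> k _; rewrite der_mul //; apply: dJ.
rewrite big_split /= addrC => e; apply: etrans e.
by congr (_ + _); apply: eq_bigr => k _; rewrite !mxE mulrC.
Qed.

Lemma der_mul3 (f1 f2 f3 : pt -> R) v : derivable f1 x v -> derivable f2 x v ->
  derivable f3 x v ->
  derive (fun y => f1 y * f2 y * f3 y) x v =
  f1 x * f2 x * derive f3 x v + f3 x * (f1 x * derive f2 x v + f2 x * derive f1 x v).
Proof.
move=> d1 d2 d3.
rewrite (@der_mul (fun y => f1 y * f2 y) f3) //; last exact: der_mul_able.
by rewrite der_mul.
Qed.

Lemma H6 c : (Pm c)^T *m gmx g x *m Jm + Jm^T *m Qm c *m Jm + Jm^T *m gmx g x *m Pm c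
  = Qm c.
Proof.
apply/matrixP => a b.
have e0 : pd (fun y => \sum_k \sum_l J y k a * J y l b * g y k l) c x =
          pd (fun y => g y a b) c x.
  rewrite /pd (@der_loc U _ (fun y => g y a b)) //.
  by move=> y Uy; rewrite (orJ _ Uy).
rewrite [RHS]mxE -e0 /pd.
rewrite (der_sum (fun k y => \sum_l J y k a * J y l b * g y k l)); last first.
  move=> k; apply: der_sum_able => l.
  by apply: der_mul_able; [apply: der_mul_able|]; [apply: dJ|apply: dJ|apply: dg].
rewrite (eq_bigr (fun k => \sum_l (J x k a * J x l b * pd (fun y => g y k l) c x
    + g x k l * (J x k a * pd (fun y => J y l b) c x + J x l b * pd (fun y => J y k a) c x))));
  last first.
  move=> k _; rewrite (der_sum (fun l y => J y k a * J y l b * g y k l)); last first.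
    move=> l; by apply: der_mul_able; [apply: der_mul_able|]; [apply: dJ|apply: dJ|apply: dg].
  by apply: eq_bigr => l _; rewrite der_mul3 //; [apply: dJ|apply: dJ|apply: dg].
rewrite !mxE -!big_split /= [RHS]exchange_big /=; apply: eq_bigr => l _.
rewrite !mxE !mulr_suml -!big_split /=; apply: eq_bigr => k _; rewrite !mxE.
ring.
Qed.
End H.
Section Alg3.
Variables (R : realType) (n : nat).
Variables (J g gi : 'I_n -> 'I_n -> R) (B : 'I_n -> R).
Hypothesis hJJ : forall i j, \sum_k J i k * J k j = - (i == j)%:R.
Hypothesis htr : \sum_i J i i = 0.
Hypothesis hO : forall i j, \sum_c \sum_d J c i * J d j * g c d = g i j.
Hypothesis hgs : forall i j, g i j = g j i.
Hypothesis hgi' : forall a e, \sum_b g a b * gi b e = (a == e)%:R.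

Definition Bs i := \sum_d gi i d * B d.
Definition K i j k := B j * (i == k)%:R + B k * (i == j)%:R - Bs i * g j k.

Lemma sum_only (F : 'I_n -> R) j :
  (forall i, (i == j) = false -> (j == i) = false -> F i = 0) -> \sum_i F i = F j.
Proof.
move=> h; rewrite (bigD1 j) //= big1 ?addr0 // => i nij.
by apply: h; [exact: negPf | rewrite eq_sym; exact: negPf].
Qed.

Lemma gBs a : \sum_c g c a * Bs c = B a.
Proof.
rewrite /Bs; under eq_bigr do rewrite mulr_sumr.
rewrite exchange_big /=.
rewrite (eq_bigr (fun e => (\sum_c g a c * gi c e) * B e)); last first.
  by move=> e _; rewrite mulr_suml; apply: eq_bigr => c _; rewrite hgs mulrA.
under eq_bigr do rewrite hgi'.
rewrite (sum_only _ a) ?eqxx ?mul1r // => i _ ->; by rewrite mul0r.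
Qed.

Lemma inner b c a :
  \sum_d (K b c d * J d a - K d c a * J b d) =
  (b == c)%:R * (\sum_d B d * J d a) - Bs b * (\sum_d g c d * J d a)
  - B a * J b c + g c a * (\sum_d J b d * Bs d).
Proof.
rewrite /K.
rewrite (eq_bigr (fun d => B c * ((b == d)%:R * J d a) + (b == c)%:R * (B d * J d a)
   + (- Bs b) * (g c d * J d a) + (- B c) * ((d == a)%:R * J b d)
   + (- B a) * ((d == c)%:R * J b d) + g c a * (J b d * Bs d))); last first.
  by move=> d _; ring.
rewrite !big_split /= -!mulr_sumr.
rewrite (sum_only (fun d => (b == d)%:R * J d a) b); last first.
  by move=> i _ ->; rewrite mul0r.
rewrite (sum_only (fun d => (d == a)%:R * J b d) a); last first.
  by move=> i -> _; rewrite mul0r.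
rewrite (sum_only (fun d => (d == c)%:R * J b d) c); last first.
  by move=> i -> _; rewrite mul0r.
rewrite !eqxx !mul1r; ring.
Qed.

Lemma Kpart a : \sum_b \sum_c J c b * \sum_d (K b c d * J d a - K d c a * J b d)
  = (n%:R - 2) * B a.
Proof.
set X := \sum_d B d * J d a.
have e : forall b c, J c b * \sum_d (K b c d * J d a - K d c a * J b d) =
   (b == c)%:R * (J c b * X) + (- Bs b) * (J c b * (\sum_d g c d * J d a))
   + (- B a) * (J c b * J b c) + g c a * (J c b * (\sum_d J b d * Bs d)).
  by move=> b c; rewrite inner /X; ring.
under eq_bigr do under eq_bigr do rewrite e.
under eq_bigr do rewrite !big_split /= -!mulr_sumr.
rewrite !big_split /=.
have e1 : \sum_b (b == b)%:R * (J b b * X) = 0.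
  by under eq_bigr do rewrite eqxx mul1r; rewrite -mulr_suml htr mul0r.
have e1' : forall b, \sum_c (b == c)%:R * (J c b * X) = J b b * X.
  move=> b; rewrite (sum_only _ b) ?eqxx ?mul1r // => i _ ->; by rewrite mul0r.
under eq_bigr do rewrite e1'.
rewrite -mulr_suml htr mul0r add0r.
have e2 : forall b, \sum_c J c b * (\sum_d g c d * J d a) = g b a.
  move=> b; rewrite -hO; apply: eq_bigr => c _; rewrite mulr_sumr.
  by apply: eq_bigr => d _; ring.
under eq_bigr do rewrite e2.
have e3 : \sum_b - Bs b * g b a = - B a.
  rewrite -(gBs a) -sumrN; apply: eq_bigr => b _; rewrite hgs; ring.
rewrite e3 -mulr_sumr exchange_big /=.
under [X in _ + (- B a) * X + _]eq_bigr do rewrite hJJ eqxx.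
rewrite sumrN sumr_const card_ord.
rewrite exchange_big /=.
have e4 : forall c, \sum_b g c a * (J c b * (\sum_d J b d * Bs d)) = - (g c a * Bs c).
  move=> c; rewrite -mulr_sumr -mulrN; congr (_ * _).
  under eq_bigr do rewrite mulr_sumr.
  rewrite exchange_big /=.
  rewrite (eq_bigr (fun d => (\sum_b J c b * J b d) * Bs d)); last first.
    by move=> d _; rewrite mulr_suml; apply: eq_bigr => b _; rewrite mulrA.
  under eq_bigr do rewrite hJJ.
  rewrite (sum_only _ c) ?eqxx; first by rewrite mulN1r.
  by move=> i _ ->; rewrite oppr0 mul0r.
under eq_bigr do rewrite e4.
rewrite sumrN gBs.
rewrite -mulr_natr; ring.
Qed.
End Alg3.

Section Alg4.
Variables (R : realType) (n : nat).
Variables (g gi : 'I_n -> 'I_n -> R) (B : 'I_n -> R).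
Variables (Gam Qf : 'I_n -> 'I_n -> 'I_n -> R).
Hypothesis htf : forall a b c, Gam a b c = Gam a c b.
Hypothesis hW : forall a b c,
  Qf a b c = \sum_d (Gam d a b * g d c + Gam d a c * g b d) + 2 * B a * g b c.
Hypothesis hgs : forall i j, g i j = g j i.
Hypothesis hgi : forall a e, \sum_d gi a d * g d e = (a == e)%:R.

Lemma koszul a b c :
  2^-1 * \sum_d gi a d * (Qf b d c + Qf c d b - Qf d b c) =
  Gam a b c + B b * (a == c)%:R + B c * (a == b)%:R - @Bs R n gi B a * g b c.
Proof.
have e d : Qf b d c + Qf c d b - Qf d b c =
   2 * (\sum_e Gam e b c * g d e) + 2 * (B b * g d c + B c * g d b - B d * g b c).
  rewrite !hW.
  have s : \sum_e (Gam e b d * g e c + Gam e b c * g d e)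
         + \sum_e (Gam e c d * g e b + Gam e c b * g d e)
         - \sum_e (Gam e d b * g e c + Gam e d c * g b e)
         = 2 * (\sum_e Gam e b c * g d e).
    rewrite -big_split -sumrB /= mulr_sumr; apply: eq_bigr => e _.
    by rewrite (htf e d b) (htf e d c) (htf e c b) (hgs b e); ring.
  rewrite -s; ring.
under eq_bigr do rewrite e.
rewrite (eq_bigr (fun d => 2 * ((gi a d * \sum_e Gam e b c * g d e)
      + B b * (gi a d * g d c) + B c * (gi a d * g d b) - g b c * (gi a d * B d)))); last first.
  by move=> d _; ring.
rewrite -mulr_sumr mulrA mulVf ?mul1r; last by rewrite pnatr_eq0.
rewrite !sumrB !big_split /= -!mulr_sumr !hgi /Bs.
under eq_bigr do rewrite mulr_sumr.
rewrite exchange_big /=.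
rewrite (eq_bigr (fun k => Gam k b c * (a == k)%:R)); last first.
  move=> k _; rewrite (eq_bigr (fun d => Gam k b c * (gi a d * g d k))); last first.
    by move=> d _; ring.
  by rewrite -mulr_sumr hgi.
rewrite (@sum_only R n (fun e => Gam e b c * (a == e)%:R) a); last first.
  by move=> i _ ->; rewrite mulr0.
rewrite eqxx mulr1; ring.
Qed.
End Alg4.
Arguments tv {R n} D.
Arguments cond {R n} Gi M.
Arguments T1 {R n} M b.
Arguments T2 {R n} M b.
Arguments T3 {R n} Gi M a.
Arguments MS {R n} Jm X c.
Section Main.
Variables (R : realType) (n : nat) (U : set 'rV[R]_n) (g J : tensor2 R n) (GW : tensor3 R n).
Hypothesis n4 : (4 <= n)%N.
Hypothesis oU : open U.
Hypothesis dgJ : forall x, U x -> forall i j,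
      differentiable (fun y => g y i j) x /\ differentiable (fun y => J y i j) x.
Hypothesis met : forall x, U x -> is_metric g x.
Hypothesis ac : forall x, U x -> almost_complex J x.
Hypothesis orth : forall x, U x -> orthogonal_for g J x.
Hypothesis tf : forall x, U x -> forall a b c, GW x a b c = GW x a c b.
Variable B : 'rV[R]_n -> 'I_n -> R.
Hypothesis hB : forall x, U x -> forall a b c, cov_metric GW g x a b c = 2 * B x a * g x b c.

Definition Gm x := gmx g x.
Definition Gi x := invmx (Gm x).
Definition Jx x := Jm R n J x.
Definition Gam x c : 'M[R]_n := \matrix_(i, j) GW x i c j.
Definition Dx x c : 'M[R]_n := \matrix_(i, j) cov_endo GW J x c i j.

Lemma L_JJ x : U x -> Jx x *m Jx x = - 1%:M.
Proof.
move=> Ux; apply/matrixP => i j; rewrite !mxE -(ac _ Ux).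
by apply: eq_bigr => k _; rewrite !mxE.
Qed.

Lemma L_O x : U x -> (Jx x)^T *m Gm x *m Jx x = Gm x.
Proof.
move=> Ux; apply/matrixP => i j; rewrite [RHS]mxE -(orth _ Ux) mxE exchange_big /=.
apply: eq_bigr => d _; rewrite !mxE mulr_suml; apply: eq_bigr => c _; rewrite !mxE; ring.
Qed.

Lemma L_GT x : U x -> (Gm x)^T = Gm x.
Proof. by move=> Ux; apply/matrixP => i j; rewrite !mxE (met _ Ux).1. Qed.

Lemma L_unit x : U x -> Gm x \in unitmx.
Proof.
move=> Ux; rewrite unitmxE unitfE; apply/negP => /det0P [v v0 vG].
have := (met _ Ux).2 v v0; rewrite -/(Gm x) vG mul0mx mxE ltxx //.
Qed.

Lemma L_Gi x : U x -> Gi x *m Gm x = 1%:M.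
Proof. by move=> Ux; rewrite /Gi mulVmx // L_unit. Qed.
Lemma L_Gi' x : U x -> Gm x *m Gi x = 1%:M.
Proof. by move=> Ux; rewrite /Gi mulmxV // L_unit. Qed.

Lemma L_W x c : U x -> Qm R n g x c =
  (Gam x c)^T *m Gm x + Gm x *m Gam x c + (2 * B x c) *: Gm x.
Proof.
move=> Ux; apply/matrixP => a b; rewrite !mxE.
have := hB _ Ux c a b; rewrite /cov_metric => /eqP; rewrite subr_eq => /eqP ->.
rewrite addrC -big_split /=; congr (_ + _).
by apply: eq_bigr => d _; rewrite !mxE; congr (_ + _); rewrite mulrC.
Qed.


Lemma L_D x c : Dx x c = Pm R n J x c + Gam x c *m Jx x - Jx x *m Gam x c.
Proof.
apply/matrixP => i j; rewrite !mxE /cov_endo sumrB addrA; congr (_ + _ - _).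
  by apply: eq_bigr => d _; rewrite !mxE.
by apply: eq_bigr => d _; rewrite !mxE mulrC.
Qed.

Lemma L_DJ x c : U x -> Dx x c *m Jx x = - (Jx x *m Dx x c).
Proof.
move=> Ux; rewrite L_D; apply: DJ; first exact: L_JJ.
exact: (@H5 _ _ _ _ _ _ oU Ux (dgJ _ Ux) ac).
Qed.

Lemma L_DG x c : U x -> (Dx x c)^T *m Gm x = - (Gm x *m Dx x c).
Proof.
move=> Ux; rewrite L_D; apply: (@DG R n (Jx x) (Gm x) (Pm R n J x c) (Qm R n g x c) (Gam x c) (2 * B x c)).
- exact: L_JJ.
- exact: L_O.
- exact: (@H5 _ _ _ _ _ _ oU Ux (dgJ _ Ux) ac).
- exact: (@H6 _ _ _ _ _ _ oU Ux (dgJ _ Ux) orth).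
- exact: L_W.
Qed.

Lemma L_JG x : U x -> (Jx x)^T *m Gm x = - (Gm x *m Jx x).
Proof. by move=> Ux; apply: hJG2; [exact: L_JJ | exact: L_O]. Qed.

Lemma Lcompat x :
  (forall b, \sum_a cov_endo GW J x a a b = 0) <-> tv (Dx x) = 0.
Proof.
split.
  move=> h; apply/rowP => b; rewrite !mxE; under eq_bigr do rewrite /Dx mxE; exact: h.
move=> h b; have := congr1 (fun v : 'rV[R]_n => v 0 b) h; rewrite !mxE.
by under eq_bigr do rewrite /Dx mxE.
Qed.

Definition ttfx (H : tensor3 R n) x :=
    (forall b, \sum_a H x a a b = 0) /\
    (forall b, \sum_a H x a b a = 0) /\
    (forall a, \sum_b \sum_c ginv g x b c * H x a b c = 0).

Lemma Lconv (H : tensor3 R n) x (M : 'I_n -> 'M[R]_n) :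
  (forall a b c, H x a b c = M c a b) -> (ttfx H x <-> cond (Gi x) M).
Proof.
move=> hM.
have e1 b : \sum_a H x a a b = T1 M b.
  by rewrite /T1 /mxtrace; apply: eq_bigr => a _; rewrite hM.
have e2 b : \sum_a H x a b a = T2 M b.
  by rewrite /T2; apply: eq_bigr => a _; rewrite hM.
have e3 a : \sum_b \sum_c ginv g x b c * H x a b c = T3 (Gi x) M a.
  rewrite /T3 exchange_big; apply: eq_bigr => c _; rewrite mxE.
  by apply: eq_bigr => b _; rewrite hM mulrC.
rewrite /ttfx /cond; split.
  by case=> [h1 [h2 h3]]; split; [|split] => i; [rewrite -e1|rewrite -e2|rewrite -e3].
by case=> [h1 [h2 h3]]; split; [|split] => i; [rewrite e1|rewrite e2|rewrite e3].
Qed.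

Lemma repG x a b c : GWtensor GW J x a b c = (- 2^-1 *: (Jx x *m Dx x c)) a b.
Proof.
rewrite /GWtensor mxE mxE; congr (_ * _); apply: eq_bigr => d _; rewrite !mxE //.
Qed.

Lemma repJG x a b c : U x -> JH J (GWtensor GW J) x a b c = (2^-1 *: Dx x c) a b.
Proof.
move=> Ux.
have e : JH J (GWtensor GW J) x a b c = (Jx x *m (- 2^-1 *: (Jx x *m Dx x c))) a b.
  by rewrite /JH mxE; apply: eq_bigr => d _; rewrite repG; congr (_ * _); rewrite /Jx /Jm mxE.
rewrite e -scalemxAr mulmxA L_JJ // mulNmx mul1mx scalerN -scaleNr opprK //.
Qed.

Lemma repXJY x a b c :
  H_XJY J (GWtensor GW J) x a b c =
  MS (Jx x) (fun e => - 2^-1 *: (Jx x *m Dx x e)) c a b.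
Proof.
rewrite /H_XJY /MS summxE; apply: eq_bigr => e _.
by rewrite repG [RHS]mxE mulrC; congr (_ * _); rewrite /Jx /Jm mxE.
Qed.

Lemma repDD x a b c : U x ->
  H_JXJY J (GWtensor GW J) x a b c =
  MS (Jx x) (fun e => - 2^-1 *: Dx x e) c a b.
Proof.
move=> Ux; rewrite /H_JXJY /MS summxE exchange_big /=; apply: eq_bigr => e _.
have JDJ : Jx x *m Dx x e *m Jx x = Dx x e.
  by rewrite -mulmxA L_DJ // mulmxN mulmxA L_JJ // mulNmx mul1mx opprK.
rewrite -mulr_suml [RHS]mxE [RHS]mulrC; congr (_ * _); last by rewrite /Jx /Jm mxE.
transitivity (((- 2^-1 *: (Jx x *m Dx x e)) *m Jx x) a b).
  rewrite [RHS]mxE; apply: eq_bigr => d _.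
  by rewrite repG; congr (_ * _); rewrite /Jx /Jm mxE.
by rewrite -scalemxAl JDJ !mxE.
Qed.

Lemma main_iff (H : tensor3 R n) (M : 'rV[R]_n -> 'I_n -> 'M[R]_n) :
  (forall x, U x -> forall a b c, H x a b c = M x c a b) ->
  (forall x, U x -> cond (Gi x) (M x) <-> tv (Dx x) = 0) ->
  (J_compatible U GW J <-> totally_trace_free U g H).
Proof.
move=> hr hc; split.
  move=> h x Ux; apply: (proj2 (@Lconv H x (M x) (hr x Ux))); apply/(hc x Ux).
  apply/Lcompat; exact: h x Ux.
move=> h x Ux; apply/Lcompat; apply/(hc x Ux).
exact: (proj1 (@Lconv H x (M x) (hr x Ux)) (h x Ux)).
Qed.

Lemma LC_eq x a b c : U x -> levi_civita g x a b c =
  GW x a b c + B x b * (a == c)%:R + B x c * (a == b)%:R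
  - Bs R n (ginv g x) (B x) a * g x b c.
Proof.
move=> Ux; rewrite /levi_civita.
apply: (@koszul R n (g x) (ginv g x) (B x) (GW x) (fun k i j => pd (fun y => g y i j) k x)).
- exact: tf.
- by move=> a' b' c'; rewrite -(hB _ Ux a' b' c') /cov_metric addrC subrK.
- exact: (met _ Ux).1.
- move=> a' e; have := congr1 (fun M : 'M[R]_n => M a' e) (L_Gi _ Ux).
  by rewrite !mxE => <-; apply: eq_bigr => d _; rewrite !mxE.
Qed.

Lemma canonB_eq x : U x -> tv (Dx x) = 0 -> forall a, canonB g J x a = B x a.
Proof.
move=> Ux t0 a.
set KK := K R n (g x) (ginv g x) (B x).
have e1 c b : cov_endo (levi_civita g) J x c b a = cov_endo GW J x c b a
   + \sum_d (KK b c d * J x d a - KK d c a * J x b d).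
  rewrite /cov_endo -addrA -big_split /=; congr (_ + _); apply: eq_bigr => d _.
  by rewrite !LC_eq // /KK /K; ring.
rewrite /canonB.
under eq_bigr do under eq_bigr do rewrite e1 mulrDr.
under eq_bigr do rewrite big_split /=.
rewrite big_split /=.
have e2 : \sum_b \sum_c J x c b * cov_endo GW J x c b a = 0.
  rewrite exchange_big /=.
  transitivity (\sum_c (Jx x *m Dx x c) c a).
    by apply: eq_bigr => c _; rewrite mxE; apply: eq_bigr => b _; rewrite /Jx /Jm /Dx !mxE.
  under eq_bigr => c _ do rewrite -[Jx x *m Dx x c]opprK -L_DJ // mxE.
  by rewrite sumrN L1 t0 mul0mx mxE oppr0.
rewrite e2 add0r.
rewrite (@Kpart R n (J x) (g x) (ginv g x) (B x)) //.
- rewrite mulKf //.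
  have h : (2 : R) < n%:R by rewrite ltr_nat; exact: ltnW n4.
  by rewrite subr_eq0 (gt_eqF h).
- exact: (ac _ Ux).
- have := @trJ R n (Jx x) (Gm x) (Gi x) (L_Gi _ Ux) (L_Gi' _ Ux) (L_GT _ Ux) (L_JG _ Ux).
  by rewrite /mxtrace => h; rewrite -[RHS]h; apply: eq_bigr => i _; rewrite /Jx /Jm mxE.
- exact: (orth _ Ux).
- exact: (met _ Ux).1.
- move=> a' e; have := congr1 (fun M : 'M[R]_n => M a' e) (L_Gi' _ Ux).
  by rewrite !mxE => <-; apply: eq_bigr => d _; rewrite !mxE.
Qed.

Lemma main_result :
  let G := GWtensor GW J in
  ((J_compatible U GW J <-> totally_trace_free U g G) /\
   (J_compatible U GW J <-> totally_trace_free U g (JH J G)) /\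
   (J_compatible U GW J <-> totally_trace_free U g (H_XJY J G)) /\
   (J_compatible U GW J <-> totally_trace_free U g (H_JXJY J G))) /\
  (J_compatible U GW J ->
     forall x, U x -> forall a b c, GW x a b c = canonical_weyl g J x a b c).
Proof.
move=> G; split; [split; [|split; [|split]]|].
- apply: (@main_iff _ (fun x c => - 2^-1 *: (Jx x *m Dx x c))).
    by move=> x Ux a b c; exact: repG.
  move=> x Ux; apply: (@cond_G R n (Jx x) (Gm x) (Gi x) (Dx x)).
  + exact: L_JJ. + exact: L_Gi. + exact: L_Gi'.
  + by move=> c; exact: L_DJ. + by move=> c; exact: L_DG.
- apply: (@main_iff _ (fun x c => 2^-1 *: Dx x c)).
    by move=> x Ux a b c; exact: repJG.
  move=> x Ux; apply: (@cond_JG R n (Jx x) (Gm x) (Gi x) (Dx x)).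
  + exact: L_JJ. + exact: L_Gi. + exact: L_Gi'.
  + by move=> c; exact: L_DJ. + by move=> c; exact: L_DG.
- apply: (@main_iff _ (fun x => MS (Jx x) (fun e => - 2^-1 *: (Jx x *m Dx x e)))).
    by move=> x Ux a b c; exact: repXJY.
  move=> x Ux; apply: (@cond_XJY R n (Jx x) (Gm x) (Gi x) (Dx x)).
  + exact: L_JJ. + exact: L_Gi. + exact: L_Gi'. + exact: L_JG.
  + by move=> c; exact: L_DJ. + by move=> c; exact: L_DG.
- apply: (@main_iff _ (fun x => MS (Jx x) (fun e => - 2^-1 *: Dx x e))).
    by move=> x Ux a b c; exact: repDD.
  move=> x Ux; apply: (@cond_DD R n (Jx x) (Gm x) (Gi x) (Dx x)).
  + exact: L_JJ. + exact: L_Gi. + exact: L_Gi'. + exact: L_JG.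
  + by move=> c; exact: L_DJ. + by move=> c; exact: L_DG.
move=> hc x Ux a b c.
have t0 : tv (Dx x) = 0 by apply/Lcompat; exact: hc x Ux.
rewrite /canonical_weyl !canonB_eq // LC_eq // /Bs.
under [X in _ = _ - _ + X * _ - _]eq_bigr do rewrite canonB_eq //.
ring.
Qed.
End Main.
Theorem lemma4p7 (R : realType) (n : nat) (U : set 'rV[R]_n)
    (g J : tensor2 R n) (GW : tensor3 R n) :
  (4 <= n)%N -> open U ->
  (forall x, U x -> forall i j,
      differentiable (fun y => g y i j) x /\ differentiable (fun y => J y i j) x) ->
  (forall x, U x -> is_metric g x) ->
  (forall x, U x -> almost_complex J x) ->
  (forall x, U x -> orthogonal_for g J x) ->
  is_weyl_connection U g GW ->
  let G := GWtensor GW J in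
  ((J_compatible U GW J <-> totally_trace_free U g G) /\
   (J_compatible U GW J <-> totally_trace_free U g (JH J G)) /\
   (J_compatible U GW J <-> totally_trace_free U g (H_XJY J G)) /\
   (J_compatible U GW J <-> totally_trace_free U g (H_JXJY J G))) /\
  (J_compatible U GW J ->
     forall x, U x -> forall a b c, GW x a b c = canonical_weyl g J x a b c).
Proof.
move=> n4 oU dgJ met ac orth [tf [B hB]].
exact: (@main_result R n U g J GW n4 oU dgJ met ac orth tf B hB).
Qed.
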